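(* Let $(M,\ast)$ be a $\Gamma$-hypersemigroup, and define a fuzzy $\Gamma$-hyperoperation on $M$ by $a\circ\gamma\circ b=\chi_{a\ast\gamma\ast b}$ for $a,b\in M$, $\gamma\in\Gamma$. Then $(M,\circ)$ is a fuzzy $\Gamma$-hypersemigroup.
   Context: $M,\Gamma$ are nonempty sets. A $\Gamma$-hypersemigroup is a set $M$ together with, for each $\gamma\in\Gamma$, a map $(x,y)\mapsto x\ast\gamma\ast y\subseteq M$, extended to subsets by unions, satisfying $(x\ast\alpha\ast y)\ast\beta\ast z=x\ast\alpha\ast(y\ast\beta\ast z)$ for all $x,y,z\in M$, $\alpha,\beta\in\Gamma$. $\chi_A$ is the characteristic function of $A\subseteq M$. A fuzzy subset of $M$ is a map $M\to[0,1]$; a fuzzy $\Gamma$-hyperoperation assigns to each $(a,\gamma,b)$ a fuzzy subset $a\circ\gamma\circ b$. For $a\in M$ and fuzzy $\mu$: $(a\circ\gamma\circ\mu)(r)=\bigvee_{t\in M}((a\circ\gamma\circ t)(r)\wedge\mu(t))$ if $\mu\ne0$, else $0$; $(\mu\circ\gamma\circ a)(r)=\bigvee_{t\in M}(\mu(t)\wedge(t\circ\gamma\circ a)(r))$ if $\mu\ne0$, else $0$. $(M,\circ)$ is a fuzzy $\Gamma$-hypersemigroup if $(a\circ\alpha\circ b)\circ\beta\circ c=a\circ\alpha\circ(b\circ\beta\circ c)$ for all $a,b,c\in M$, $\alpha,\beta\in\Gamma$. *)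

(* Defs.v *)
From HB Require Import structures.
From mathcomp Require Import all_boot all_order all_algebra.
From mathcomp Require Import all_classical all_reals.
From mathcomp Require Import numfun.
Set Implicit Arguments. Unset Strict Implicit. Unset Printing Implicit Defensive.
Import Order.TTheory GRing.Theory Num.Theory.
Local Open Scope classical_set_scope.
Local Open Scope ring_scope.

(* Gamma-hyperoperation: (x, gamma, y) |-> x * gamma * y, a subset of M. *)
Definition ghop (M G : Type) := M -> G -> M -> set M.

Definition ghop_setl (M G : Type) (op : ghop M G) (A : set M) (g : G) (z : M)
  : set M := \bigcup_(u in A) op u g z.
Definition ghop_setr (M G : Type) (op : ghop M G) (x : M) (g : G) (B : set M)
  : set M := \bigcup_(v in B) op x g v.

Definition is_gamma_hypersemigroup (M G : Type) (op : ghop M G) : Prop :=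
  forall (x y z : M) (a b : G),
    ghop_setl op (op x a y) b z = ghop_setr op x a (op y b z).

Definition is_fuzzy (R : realType) (M : Type) (mu : M -> R) : Prop :=
  forall x, 0 <= mu x <= 1.

Definition fghop (R : realType) (M G : Type) := M -> G -> M -> (M -> R).

Definition is_fuzzy_ghop (R : realType) (M G : Type) (fo : fghop R M G) : Prop :=
  forall a g b, is_fuzzy (fo a g b).

Definition fuzzy_compr (R : realType) (M G : Type) (fo : fghop R M G)
  (a : M) (g : G) (mu : M -> R) : M -> R :=
  fun r => if `[< mu = (fun _ => 0) >] then 0
           else sup [set Num.min (fo a g t r) (mu t) | t in [set: M]].

Definition fuzzy_compl (R : realType) (M G : Type) (fo : fghop R M G)
  (mu : M -> R) (g : G) (a : M) : M -> R :=
  fun r => if `[< mu = (fun _ => 0) >] then 0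
           else sup [set Num.min (mu t) (fo t g a r) | t in [set: M]].

Definition is_fuzzy_gamma_hypersemigroup (R : realType) (M G : Type)
  (fo : fghop R M G) : Prop :=
  is_fuzzy_ghop fo /\
  forall (a b c : M) (al be : G),
    fuzzy_compl fo (fo a al b) be c = fuzzy_compr fo a al (fo b be c).

Definition chi_fghop (R : realType) (M G : Type) (op : ghop M G) : fghop R M G :=
  fun a g b => \1_(op a g b).

(* Main.v *)
Require Import Defs.
From mathcomp Require Import all_boot all_order all_algebra.
From mathcomp Require Import all_classical all_reals.
From mathcomp Require Import numfun.
Import Order.TTheory GRing.Theory Num.Theory.
Local Open Scope classical_set_scope.
Local Open Scope ring_scope.

Lemma key (R : realType) (M : Type) (hM : inhabited M) (A : set M)
  (F : M -> set M) (r : M) :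
  (if `[< (\1_A : M -> R) = (fun _ => 0) >] then 0
   else sup [set Num.min ((\1_A : M -> R) t) ((\1_(F t) : M -> R) r) | t in [set: M]])
  = (\1_(\bigcup_(t in A) F t) : M -> R) r.
Proof.
have in01 : forall (S : set M) x, ((\1_S : M -> R) x = 0) \/ ((\1_S : M -> R) x = 1).
  by move=> S x; rewrite indicE; case: (x \in S); [right|left].
case: hM => m0.
have ub : ubound [set Num.min ((\1_A : M -> R) t) ((\1_(F t) : M -> R) r) | t in [set: M]] 1.
  move=> _ [t _ <-]; rewrite ge_min; apply/orP; left.
  by case: (in01 A t) => ->.
have ne : [set Num.min ((\1_A : M -> R) t) ((\1_(F t) : M -> R) r) | t in [set: M]] !=set0.
  by exists (Num.min ((\1_A : M -> R) m0) ((\1_(F m0) : M -> R) r)); exists m0.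
have hub : has_ubound [set Num.min ((\1_A : M -> R) t) ((\1_(F t) : M -> R) r) | t in [set: M]].
  by exists 1.
case: (boolP (r \in \bigcup_(t in A) F t)) => hr.
- have := hr; rewrite inE => -[t At Ftr].
  rewrite indicE hr.
  have h1 : (\1_A : M -> R) t = 1 by rewrite indicE (mem_set At).
  have h2 : (\1_(F t) : M -> R) r = 1 by rewrite indicE (mem_set Ftr).
  case: asboolP => [e|_].
    by have := congr1 (fun f => f t) e; rewrite /= h1 => /eqP; rewrite oner_eq0.
  apply: le_anti; rewrite ge_sup //=.
  apply: ub_le_sup => //; exists t => //; by rewrite h1 h2 minxx.
- rewrite indicE (negbTE hr).
  case: asboolP => // _.
  have ub0 : ubound [set Num.min ((\1_A : M -> R) t) ((\1_(F t) : M -> R) r) | t in [set: M]] 0.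
    move=> _ [t _ <-]; rewrite ge_min; apply/orP.
    case: (boolP (t \in A)) => tA.
      right; rewrite indicE; case: (boolP (r \in F t)) => // Ftr.
      by exfalso; move/negP: hr; apply; rewrite inE; exists t; [exact: set_mem tA|exact: set_mem Ftr].
    by left; rewrite indicE (negbTE tA).
  apply: le_anti; rewrite ge_sup //=.
  apply: (le_trans _ (ub_le_sup hub _)); last first.
    by exists m0.
  rewrite le_min; apply/andP; split;
  [case: (in01 A m0) => ->|case: (in01 (F m0) r) => ->]; by rewrite ?ler01.
Qed.

Theorem theorem4p18 (R : realType) (M G : Type)
  (hM : inhabited M) (hG : inhabited G) (op : ghop M G) :
  is_gamma_hypersemigroup op ->
  is_fuzzy_gamma_hypersemigroup (chi_fghop R op).
Proof.
move=> H; split.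
  move=> a g b x; rewrite /chi_fghop indicE; case: (x \in _) => /=;
  by rewrite ?lexx ?ler01.
move=> a b c al be; apply: funext => r.
rewrite /fuzzy_compl /fuzzy_compr /chi_fghop.
rewrite (@key R M hM (op a al b) (fun t => op t be c) r).
have -> : [set Num.min ((\1_(op a al t) : M -> R) r) ((\1_(op b be c) : M -> R) t) | t in [set: M]]
  = [set Num.min ((\1_(op b be c) : M -> R) t) ((\1_(op a al t) : M -> R) r) | t in [set: M]].
  by apply: eq_imagel => t _; rewrite minC.
rewrite (@key R M hM (op b be c) (fun t => op a al t) r).
by have := H a b c al be; rewrite /ghop_setl /ghop_setr => ->.
Qed.
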